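(* Let $A=\sum_{i=1}^m e_ia_i^T$ be a real $m\times n$ matrix with rows $a_1,\dots,a_m\in\mathbb R^n$, and define $A_4=\sum_{i=1}^m a_i^{\otimes4}\in(\mathbb R^n)^{\otimes4}$, $A_3=\sum_{i=1}^m a_i\otimes a_i\otimes e_i\in\mathbb R^n\otimes\mathbb R^n\otimes\mathbb R^m$, and $A_{2,2}=\sum_{i=1}^m a_ia_i^T\otimes a_ia_i^T$, an operator on $(\mathbb R^n)^{\otimes2}$. Then \[\|A\|_{2\to4}^4=\|A_4\|_{\rm inj}=\|A_3\|_{\rm inj}^2=\|A_4\|_{{\rm inj}[\mathbb C]}=\|A_3\|_{{\rm inj}[\mathbb C]}^2=h_{\mathrm{Sep}^2(\mathbb R^n)}(A_{2,2})=h_{\mathrm{Sep}^2(\mathbb C^n)}(A_{2,2}).\]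
   Context: In this statement all norms and inner products are counting (unnormalized) ones: $\|x\|_p=(\sum_i|x_i|^p)^{1/p}$, $\langle x,y\rangle=\sum_i \bar x_iy_i$, $\|A\|_{2\to4}=\max_{x\ne0}\|Ax\|_4/\|x\|_2$ over $x\in\mathbb R^n$, and $e_i$ is the $i$-th standard basis vector. For a tensor $T\in V_1\otimes\cdots\otimes V_r$ of real spaces, $\|T\|_{\rm inj}=\max|\langle T,x_1\otimes\cdots\otimes x_r\rangle|$ over real unit vectors $x_j\in V_j$, and $\|T\|_{{\rm inj}[\mathbb C]}$ is the same maximum over complex unit vectors $x_j$. For $\mathbb F\in\{\mathbb R,\mathbb C\}$, $\mathrm{Sep}^2(\mathbb F^n)=\mathrm{conv}\{v_1v_1^*\otimes v_2v_2^*: v_1,v_2\in\mathbb F^n,\ \|v_1\|_2=\|v_2\|_2=1\}$, and for a bounded convex set $K$ of matrices, $h_K(X)=\max_{Y\in K}|\langle X,Y\rangle|$ with $\langle X,Y\rangle=\mathrm{tr}(X^*Y)$. *)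

(* Defs.v *)
From HB Require Import structures.
From mathcomp Require Import all_boot all_order all_algebra.
From mathcomp Require Import boolp classical_sets reals exp.
From mathcomp Require Import complex.
Set Implicit Arguments. Unset Strict Implicit. Unset Printing Implicit Defensive.
Import Order.TTheory GRing.Theory Num.Theory.
Local Open Scope classical_set_scope.
Local Open Scope ring_scope.

Section Defs.
Variable R : realType.
Local Notation C := R[i].

Definition lpnorm (p : R) (k : nat) (x : 'I_k -> R) : R :=
  (\sum_(i < k) `|x i| `^ p) `^ p^-1.

Definition clpnorm (p : R) (k : nat) (x : 'I_k -> C) : R :=
  (\sum_(i < k) Normc.normc (x i) `^ p) `^ p^-1.

Definition runit (k : nat) (x : 'I_k -> R) : Prop := lpnorm 2%:R x = 1.
Definition cunit (k : nat) (x : 'I_k -> C) : Prop := clpnorm 2%:R x = 1.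

Definition mxapply (m n : nat) (A : 'M[R]_(m, n)) (x : 'I_n -> R) : 'I_m -> R :=
  fun i => \sum_(j < n) A i j * x j.

Definition norm2to4 (m n : nat) (A : 'M[R]_(m, n)) : R :=
  sup [set r | exists x : 'I_n -> R, x <> (fun _ => 0) /\
         r = lpnorm 4%:R (mxapply A x) / lpnorm 2%:R x].

Definition tensor4 (n1 n2 n3 n4 : nat) := 'I_n1 -> 'I_n2 -> 'I_n3 -> 'I_n4 -> R.
Definition tensor3 (n1 n2 n3 : nat) := 'I_n1 -> 'I_n2 -> 'I_n3 -> R.

(* <T, x1 (x) ... (x) xr>  with <x,y> = sum conj(x_i) y_i *)
Definition pair4R n1 n2 n3 n4 (T : tensor4 n1 n2 n3 n4) x1 x2 x3 x4 : R :=
  \sum_(i < n1) \sum_(j < n2) \sum_(k < n3) \sum_(l < n4)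
     T i j k l * (x1 i * x2 j * x3 k * x4 l).
Definition pair4C n1 n2 n3 n4 (T : tensor4 n1 n2 n3 n4)
    (x1 : 'I_n1 -> C) (x2 : 'I_n2 -> C) (x3 : 'I_n3 -> C) (x4 : 'I_n4 -> C) : C :=
  \sum_(i < n1) \sum_(j < n2) \sum_(k < n3) \sum_(l < n4)
     ((T i j k l)%:C)^*%C * (x1 i * x2 j * x3 k * x4 l).
Definition pair3R n1 n2 n3 (T : tensor3 n1 n2 n3) x1 x2 x3 : R :=
  \sum_(i < n1) \sum_(j < n2) \sum_(k < n3) T i j k * (x1 i * x2 j * x3 k).
Definition pair3C n1 n2 n3 (T : tensor3 n1 n2 n3)
    (x1 : 'I_n1 -> C) (x2 : 'I_n2 -> C) (x3 : 'I_n3 -> C) : C :=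
  \sum_(i < n1) \sum_(j < n2) \sum_(k < n3)
     ((T i j k)%:C)^*%C * (x1 i * x2 j * x3 k).

Definition inj4 n1 n2 n3 n4 (T : tensor4 n1 n2 n3 n4) : R :=
  sup [set r | exists x1 x2 x3 x4, runit x1 /\ runit x2 /\ runit x3 /\ runit x4 /\
         r = `|pair4R T x1 x2 x3 x4|].
Definition inj4C n1 n2 n3 n4 (T : tensor4 n1 n2 n3 n4) : R :=
  sup [set r | exists x1 x2 x3 x4, cunit x1 /\ cunit x2 /\ cunit x3 /\ cunit x4 /\
         r = Normc.normc (pair4C T x1 x2 x3 x4)].
Definition inj3 n1 n2 n3 (T : tensor3 n1 n2 n3) : R :=
  sup [set r | exists x1 x2 x3, runit x1 /\ runit x2 /\ runit x3 /\
         r = `|pair3R T x1 x2 x3|].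
Definition inj3C n1 n2 n3 (T : tensor3 n1 n2 n3) : R :=
  sup [set r | exists x1 x2 x3, cunit x1 /\ cunit x2 /\ cunit x3 /\
         r = Normc.normc (pair3C T x1 x2 x3)].

(* A_4 = sum_i a_i^{(x)4}, A_3 = sum_i a_i (x) a_i (x) e_i, a_i = i-th row of A *)
Definition A4 m n (A : 'M[R]_(m, n)) : tensor4 n n n n :=
  fun i j k l => \sum_(t < m) A t i * A t j * A t k * A t l.
Definition A3 m n (A : 'M[R]_(m, n)) : tensor3 n n m :=
  fun i j k => \sum_(t < m) A t i * A t j * (t == k)%:R.

(* operators on F^n (x) F^n, indexed by pairs: (i,k) <-> e_i (x) e_k *)
Definition op2 (F : Type) (n : nat) := ('I_n * 'I_n)%type -> ('I_n * 'I_n)%type -> F.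

Definition kron (F : pzRingType) n (M N : 'I_n -> 'I_n -> F) : op2 F n :=
  fun p q => M p.1 q.1 * N p.2 q.2.

Definition router n (v : 'I_n -> R) : 'I_n -> 'I_n -> R := fun i j => v i * v j.
Definition couter n (v : 'I_n -> C) : 'I_n -> 'I_n -> C := fun i j => v i * (v j)^*%C.

Definition A22 m n (A : 'M[R]_(m, n)) : op2 R n :=
  fun p q => \sum_(t < m) kron (router (fun j => A t j)) (router (fun j => A t j)) p q.

Definition SepR n : set (op2 R n) :=
  [set Y | exists (k : nat) (w : 'I_k -> R) (v1 v2 : 'I_k -> 'I_n -> R),
     (forall j, 0 <= w j) /\ \sum_(j < k) w j = 1 /\
     (forall j, runit (v1 j) /\ runit (v2 j)) /\
     Y = fun p q => \sum_(j < k) w j * kron (router (v1 j)) (router (v2 j)) p q].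
Definition SepC n : set (op2 C n) :=
  [set Y | exists (k : nat) (w : 'I_k -> R) (v1 v2 : 'I_k -> 'I_n -> C),
     (forall j, 0 <= w j) /\ \sum_(j < k) w j = 1 /\
     (forall j, cunit (v1 j) /\ cunit (v2 j)) /\
     Y = fun p q => \sum_(j < k) (w j)%:C%C * kron (couter (v1 j)) (couter (v2 j)) p q].

(* h_K(X) = max_{Y in K} |<X,Y>|, <X,Y> = tr(X^* Y) = sum_{p,q} conj(X_pq) Y_pq *)
Definition hSepR n (X : op2 R n) : R :=
  sup [set r | exists Y, @SepR n Y /\ r = `|\sum_p \sum_q X p q * Y p q|].
Definition hSepC n (X : op2 C n) : R :=
  sup [set r | exists Y, @SepC n Y /\
         r = Normc.normc (\sum_p \sum_q (X p q)^*%C * Y p q)].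

End Defs.

(* Main.v *)
Require Import Defs.
From HB Require Import structures.
From mathcomp Require Import all_boot all_order all_algebra.
From mathcomp Require Import boolp classical_sets reals exp.
From mathcomp Require Import complex.
From mathcomp Require Import ring lra.
Import Order.TTheory GRing.Theory Num.Theory.
Local Open Scope ring_scope.

Section Gen.
Variable F : comPzRingType.
Variables (m n : nat) (c : 'I_m -> 'I_n -> F).
Definition gdot (x : 'I_n -> F) t := \sum_(j < n) c t j * x j.


Lemma sum4_mul (a b d e : 'I_n -> F) :
  (\sum_i a i) * (\sum_j b j) * (\sum_k d k) * (\sum_l e l) =
  \sum_i \sum_j \sum_k \sum_l (a i * b j * d k * e l).
Proof.
rewrite -!mulrA mulr_suml; apply: eq_bigr => i _.
rewrite mulr_suml mulr_sumr; apply: eq_bigr => j _.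
rewrite mulr_suml !mulr_sumr; apply: eq_bigr => k _.
rewrite !mulr_sumr; apply: eq_bigr => l _.
by rewrite !mulrA.
Qed.

Lemma G4 (x1 x2 x3 x4 : 'I_n -> F) :
  \sum_i \sum_j \sum_k \sum_l
    ((\sum_t c t i * c t j * c t k * c t l) * (x1 i * x2 j * x3 k * x4 l)) =
  \sum_t (gdot x1 t * gdot x2 t * gdot x3 t * gdot x4 t).
Proof.
under [RHS]eq_bigr => t _ do rewrite /gdot (sum4_mul (fun j => c t j * x1 j) (fun j => c t j * x2 j) (fun j => c t j * x3 j) (fun j => c t j * x4 j)).
rewrite [RHS]exchange_big; apply: eq_bigr => i _.
rewrite [RHS]exchange_big; apply: eq_bigr => j _.
rewrite [RHS]exchange_big; apply: eq_bigr => k _.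
rewrite [RHS]exchange_big; apply: eq_bigr => l _.
rewrite mulr_suml; apply: eq_bigr => t _.
ring.
Qed.

Lemma G3 (x y : 'I_n -> F) (z : 'I_m -> F) :
  \sum_i \sum_j \sum_k
    ((\sum_t c t i * c t j * (t == k)%:R) * (x i * y j * z k)) =
  \sum_t (gdot x t * gdot y t * z t).
Proof.
transitivity (\sum_i \sum_j \sum_t (c t i * c t j) * (x i * y j * z t)).
  apply: eq_bigr => i _; apply: eq_bigr => j _.
  under eq_bigr => k _ do rewrite mulr_suml.
  rewrite exchange_big; apply: eq_bigr => t _.
  rewrite (bigD1 t) //= big1 ?addr0; first by rewrite eqxx mulr1.
  by move=> k /negPf; rewrite eq_sym => ->; rewrite mulr0 mul0r.
rewrite /gdot.
under [RHS]eq_bigr => t _ do rewrite -mulrA mulr_suml.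
rewrite [RHS]exchange_big; apply: eq_bigr => i _.
under [RHS]eq_bigr => t _ do rewrite mulr_suml mulr_sumr.
rewrite [RHS]exchange_big; apply: eq_bigr => j _.
apply: eq_bigr => t _; ring.
Qed.

Lemma sum_pair (G : 'I_n * 'I_n -> F) :
  \sum_(p : 'I_n * 'I_n) G p = \sum_i \sum_k G (i, k).
Proof. by rewrite pair_bigA; apply: eq_bigr => -[]. Qed.

Lemma G22 (y1 y1' y2 y2' : 'I_n -> F) :
  \sum_(p : 'I_n * 'I_n) \sum_(q : 'I_n * 'I_n)
    ((\sum_t (c t p.1 * c t q.1 * (c t p.2 * c t q.2))) *
     (y1 p.1 * y1' q.1 * (y2 p.2 * y2' q.2))) =
  \sum_t (gdot y1 t * gdot y1' t * gdot y2 t * gdot y2' t).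
Proof.
transitivity (\sum_t (gdot y1 t * gdot y2 t * gdot y1' t * gdot y2' t)); last by apply: eq_bigr => t _; ring.
rewrite -(G4 y1 y2 y1' y2').
rewrite sum_pair; apply: eq_bigr => i _.
transitivity (\sum_k \sum_j \sum_l (\sum_t c t i * c t k * c t j * c t l) * (y1 i * y2 k * y1' j * y2' l)).
  apply: eq_bigr => k _; rewrite sum_pair; apply: eq_bigr => j _; apply: eq_bigr => l _.
  congr (_ * _); last by ring.
  by apply: eq_bigr => t _; ring.
by [].
Qed.
End Gen.
Arguments gdot {F m n} c x t.
Arguments G4 {F m n} c x1 x2 x3 x4.
Arguments G3 {F m n} c x y z.
Arguments G22 {F m n} c y1 y1' y2 y2'.

Section Basic.
Context {R : realType}.

Lemma my_sup_ub {E : set R} {B e} : ubound E B -> E e -> e <= sup E.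
Proof. by move=> hB he; apply: sup_upper_bound => //; split; [exists e | exists B]. Qed.

Lemma my_sup_le {E : set R} {b} : (forall e, E e -> e <= b) -> 0 <= b -> sup E <= b.
Proof.
move=> h b0; case: (pselect (exists e, E e)) => [[e he]|ne].
  by apply: ge_sup; [exists e | move=> y /h].
have -> : E = set0 by apply/seteqP; split => x // Ex; exfalso; apply: ne; exists x.
by rewrite sup0.
Qed.

Lemma my_sup_ge0 {E : set R} {B} : ubound E B -> (forall e, E e -> 0 <= e) -> 0 <= sup E.
Proof.
move=> hB h; case: (pselect (exists e, E e)) => [[e he]|ne].
  exact: (le_trans (h _ he) (my_sup_ub hB he)).
have -> : E = set0 by apply/seteqP; split => x // Ex; exfalso; apply: ne; exists x.
by rewrite sup0.
Qed.

Lemma powR_inv_exp (s : R) k : 0 <= s -> (0 < k)%N -> (s `^ (k%:R)^-1) ^+ k = s.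
Proof.
move=> s0 k0; rewrite -powR_mulrn ?powR_ge0 // -powRrM mulVf ?powRr1 //.
by rewrite pnatr_eq0 -lt0n.
Qed.

Lemma lpnorm_exp k (x : 'I_k -> R) p : (0 < p)%N ->
  lpnorm p%:R x ^+ p = \sum_(i < k) `|x i| ^+ p.
Proof.
move=> p0; rewrite /lpnorm powR_inv_exp //; last by apply: sumr_ge0 => i _; apply: powR_ge0.
by apply: eq_bigr => i _; rewrite powR_mulrn.
Qed.

Lemma lpnorm_ge0 p k (x : 'I_k -> R) : 0 <= lpnorm p x.
Proof. exact: powR_ge0. Qed.

Lemma runitE k (x : 'I_k -> R) : runit x <-> \sum_i x i ^+ 2 = 1.
Proof.
have e : lpnorm 2%:R x ^+ 2 = \sum_i x i ^+ 2.
  by rewrite lpnorm_exp //; apply: eq_bigr => i _; rewrite real_normK ?num_real.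
have := lpnorm_ge0 2%:R _ x; rewrite /runit; split => [h|h].
  by rewrite -e h expr1n.
move: e; rewrite h => e; nra.
Qed.

Lemma normc_sqr (z : R[i]) : Normc.normc z ^+ 2 = complex.Re z ^+ 2 + complex.Im z ^+ 2.
Proof. by case: z => a b /=; rewrite sqr_sqrtr // addr_ge0 // sqr_ge0. Qed.

Lemma normc_ge0 (z : R[i]) : 0 <= Normc.normc z.
Proof. by case: z => a b /=; apply: sqrtr_ge0. Qed.

Lemma normc_real (r : R) : Normc.normc (r%:C)%C = `|r|.
Proof. by rewrite /= expr0n /= addr0 sqrtr_sqr. Qed.

Lemma clpnorm_exp k (x : 'I_k -> R[i]) :
  clpnorm 2%:R x ^+ 2 = \sum_(i < k) Normc.normc (x i) ^+ 2.
Proof.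
rewrite /clpnorm powR_inv_exp //; last by apply: sumr_ge0 => i _; apply: powR_ge0.
by apply: eq_bigr => i _; rewrite powR_mulrn // normc_ge0.
Qed.

Lemma cunitE k (x : 'I_k -> R[i]) : cunit x <-> \sum_i Normc.normc (x i) ^+ 2 = 1.
Proof.
have e := clpnorm_exp _ x.
have : 0 <= clpnorm 2%:R x by apply: powR_ge0.
rewrite /cunit; split => [h|h].
  by rewrite -e h expr1n.
move: e; rewrite h => e; nra.
Qed.

Lemma normc_sum (I : Type) (r : seq I) (F : I -> R[i]) :
  Normc.normc (\sum_(i <- r) F i) <= \sum_(i <- r) Normc.normc (F i).
Proof.
elim: r => [|a r IH]; first by rewrite !big_nil Normc.normc0.
rewrite !big_cons; apply: le_trans (le_normcD _ _) _; by rewrite lerD2l.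
Qed.

Lemma sumC (I : Type) (r : seq I) (F : I -> R[i]) :
  \sum_(i <- r) F i = ((\sum_(i <- r) complex.Re (F i)) +i* (\sum_(i <- r) complex.Im (F i)))%C.
Proof.
elim: r => [|a r IH]; first by rewrite !big_nil.
by rewrite !big_cons IH; case: (F a).
Qed.

Lemma zconj (z : R[i]) : z * z^*%C = ((Normc.normc z) ^+ 2)%:C%C.
Proof.
rewrite normc_sqr; case: z => a b /=.
by apply/eqP; rewrite eq_complex /=; apply/andP; split; apply/eqP; ring.
Qed.

Lemma amgm4 (a b c e : R) : 0 <= a -> 0 <= b -> 0 <= c -> 0 <= e ->
  a * b * c * e <= (a ^+ 4 + b ^+ 4 + c ^+ 4 + e ^+ 4) / 4.
Proof.
move=> a0 b0 c0 e0.
have h1 : 0 <= (a ^+ 2 - b ^+ 2) ^+ 2 by apply: sqr_ge0.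
have h2 : 0 <= (c ^+ 2 - e ^+ 2) ^+ 2 by apply: sqr_ge0.
have h3 : 0 <= (a * b - c * e) ^+ 2 by apply: sqr_ge0.
nra.
Qed.

Lemma sumsq_exp (k : nat) (a b : 'I_k -> R) (p q : R) :
  \sum_i (p * a i - q * b i) ^+ 2 =
  p ^+ 2 * (\sum_i a i ^+ 2) - 2 * p * q * (\sum_i a i * b i) + q ^+ 2 * (\sum_i b i ^+ 2).
Proof.
transitivity (\sum_i (p ^+ 2 * a i ^+ 2 - 2 * p * q * (a i * b i) + q ^+ 2 * b i ^+ 2)).
  by apply: eq_bigr => i _; ring.
by rewrite big_split /= sumrB -!mulr_sumr.
Qed.

Lemma cs (k : nat) (a b : 'I_k -> R) :
  (\sum_i a i * b i) ^+ 2 <= (\sum_i a i ^+ 2) * (\sum_i b i ^+ 2).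
Proof.
have h := sumsq_exp _ a b (\sum_i a i * b i) (\sum_i a i ^+ 2).
have A0 : 0 <= \sum_i a i ^+ 2 by apply: sumr_ge0 => i _; apply: sqr_ge0.
have B0 : 0 <= \sum_i b i ^+ 2 by apply: sumr_ge0 => i _; apply: sqr_ge0.
have [Ae|Ap] := eqVneq (\sum_i a i ^+ 2) 0.
  have z : forall i, a i = 0.
    move=> i; apply/eqP; rewrite -sqrf_eq0; apply/eqP.
    by apply: (psumr_eq0P (fun i _ => sqr_ge0 (a i)) Ae).
  by rewrite big1 ?expr0n ?mulr_ge0 // => i _; rewrite z mul0r.
have Ap' : 0 < \sum_i a i ^+ 2 by rewrite lt_neqAle eq_sym Ap.
move: h Ap' A0 B0.
set P := \sum_i a i * b i; set Aa := \sum_i a i ^+ 2; set B := \sum_i b i ^+ 2.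
move=> h Ap' A0 B0.
have : 0 <= \sum_i (P * a i - Aa * b i) ^+ 2 by apply: sumr_ge0 => i _; apply: sqr_ge0.
rewrite h => h1.
have : 0 <= Aa * (Aa * B - P ^+ 2) by nra.
rewrite pmulr_rge0 // subr_ge0 => h2; lra.
Qed.

Lemma le_sqrt (r s : R) : 0 <= r -> r ^+ 2 <= s -> r <= Num.sqrt s.
Proof. by move=> r0 h; rewrite -(ger0_norm r0) -sqrtr_sqr; apply: ler_wsqrtr. Qed.

Lemma le_sqrt4 (r s : R) : 0 <= r -> r ^+ 4 <= s -> r <= Num.sqrt (Num.sqrt s).
Proof.
move=> r0 h; apply: le_sqrt => //; apply: le_sqrt; first exact: sqr_ge0.
by rewrite -exprM.
Qed.

Lemma sqrt4K (s : R) : 0 <= s -> Num.sqrt (Num.sqrt s) ^+ 4 = s.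
Proof.
move=> s0; rewrite (_ : 4 = 2 * 2)%N // exprM sqr_sqrtr ?sqrtr_ge0 //.
by rewrite sqr_sqrtr.
Qed.

End Basic.

Section Main.
Variables (R : realType) (m n : nat) (A : 'M[R]_(m, n)).
Definition cR : 'I_m -> 'I_n -> R := fun t j => A t j.
Definition cC : 'I_m -> 'I_n -> R[i] := fun t j => (A t j)%:C%C.
Definition dd (x : 'I_n -> R) t := gdot cR x t.
Definition ddC (x : 'I_n -> R[i]) t := gdot cC x t.
Definition sq (x : 'I_n -> R) := \sum_j x j ^+ 2.
Definition ff x := \sum_t dd x t ^+ 4.
Definition QQ x y := \sum_t dd x t ^+ 2 * dd y t ^+ 2.
Definition ES : set R := [set r : R | exists x, sq x = 1 /\ r = ff x].
Definition Sv := sup ES.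
Definition Bd := \sum_t (\sum_j `|A t j|) ^+ 4.

Lemma ES_ub : ubound ES Bd.
Proof.
move=> r [x [hx ->]]; rewrite /ff /Bd; apply: ler_sum => t _.
have hxj : forall j, `|x j| <= 1.
  move=> j; have : x j ^+ 2 <= 1.
    rewrite -hx /sq (bigD1 j) //= lerDl; apply: sumr_ge0 => i _; apply: sqr_ge0.
  move=> h; rewrite -real_normK ?num_real in h; have := normr_ge0 (x j); nra.
have hd : `|dd x t| <= \sum_j `|A t j|.
  apply: le_trans (ler_norm_sum _ _ _) _; apply: ler_sum => j _.
  rewrite normrM; have := normr_ge0 (A t j); have := hxj j; rewrite /cR; nra.
have -> : dd x t ^+ 4 = `|dd x t| ^+ 4.
  by rewrite -normrX ger0_norm // exprn_even_ge0.
by apply: lerXn2r => //; rewrite nnegrE ?normr_ge0 //; apply: le_trans hd.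
Qed.

Lemma ff_ge0 x : 0 <= ff x.
Proof. by apply: sumr_ge0 => t _; apply: exprn_even_ge0. Qed.

Lemma Sv_ge0 : 0 <= Sv.
Proof. have h := @my_sup_ge0 R ES Bd ES_ub; apply: h => e [x [_ ->]]; exact: ff_ge0. Qed.

Lemma ff_le_Sv x : sq x = 1 -> ff x <= Sv.
Proof. move=> h; have h2 := @my_sup_ub R ES Bd (ff x) ES_ub; apply: h2; by exists x. Qed.

Lemma sq_ge0 x : 0 <= sq x.
Proof. by apply: sumr_ge0 => j _; apply: sqr_ge0. Qed.

Lemma sq_eq0 x : sq x = 0 -> forall j, x j = 0.
Proof.
move=> h j; apply/eqP; rewrite -sqrf_eq0; apply/eqP.
by apply: (psumr_eq0P (fun i _ => sqr_ge0 (x i)) h).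
Qed.

Lemma dd_zero x t : (forall j, x j = 0) -> dd x t = 0.
Proof. by move=> h; rewrite /dd /gdot big1 // => j _; rewrite h mulr0. Qed.

Lemma dd_scale x s t : dd (fun j => x j / s) t = dd x t / s.
Proof. by rewrite /dd /gdot mulr_suml; apply: eq_bigr => j _; rewrite mulrA. Qed.

Lemma sq_scale x s : sq (fun j => x j / s) = sq x / s ^+ 2.
Proof. by rewrite /sq mulr_suml; apply: eq_bigr => j _; rewrite expr_div_n. Qed.

Lemma QQ_le u v : QQ u v <= Sv * sq u * sq v.
Proof.
have S0 := Sv_ge0.
have [u0|up] := eqVneq (sq u) 0.
  rewrite /QQ big1 ?u0 ?mulr0 ?mul0r // => t _.
  by rewrite dd_zero ?expr0n /= ?mul0r //; apply: sq_eq0.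
have [v0|vp] := eqVneq (sq v) 0.
  rewrite /QQ big1 ?v0 ?mulr0 ?mul0r // => t _.
  by rewrite (@dd_zero v) ?expr0n /= ?mulr0 //; apply: sq_eq0.
have up' : 0 < sq u by rewrite lt_neqAle eq_sym up sq_ge0.
have vp' : 0 < sq v by rewrite lt_neqAle eq_sym vp sq_ge0.
set a := Num.sqrt (sq u); set b := Num.sqrt (sq v).
have a0 : 0 < a by rewrite sqrtr_gt0.
have b0 : 0 < b by rewrite sqrtr_gt0.
have a2 : a ^+ 2 = sq u by rewrite sqr_sqrtr // ltW.
have b2 : b ^+ 2 = sq v by rewrite sqr_sqrtr // ltW.
have hu : sq (fun j => u j / a) = 1 by rewrite sq_scale a2 divff.
have hv : sq (fun j => v j / b) = 1 by rewrite sq_scale b2 divff.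
have fu := ff_le_Sv _ hu; have fv := ff_le_Sv _ hv.
have key : QQ u v = sq u * sq v * QQ (fun j => u j / a) (fun j => v j / b).
  rewrite /QQ mulr_sumr; apply: eq_bigr => t _; rewrite !dd_scale -a2 -b2.
  by field; rewrite ?gt_eqF.
have h2 : 2 * QQ (fun j => u j / a) (fun j => v j / b) <=
          ff (fun j => u j / a) + ff (fun j => v j / b).
  rewrite /QQ /ff mulr_sumr -big_split; apply: ler_sum => t _ /=.
  set p := dd _ t; set q := dd _ t.
  have h := sqr_ge0 (p ^+ 2 - q ^+ 2); nra.
have hq : QQ (fun j => u j / a) (fun j => v j / b) <= Sv by lra.
rewrite key; have -> : Sv * sq u * sq v = sq u * sq v * Sv by ring.
by apply: ler_wpM2l => //; apply: mulr_ge0; apply: sq_ge0.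
Qed.

Lemma ff_QQ x : ff x = QQ x x.
Proof. by apply: eq_bigr => t _; rewrite -exprD. Qed.

Lemma ff_le x : ff x <= Sv * sq x ^+ 2.
Proof. by rewrite ff_QQ expr2 mulrA; apply: QQ_le. Qed.

Definition re (x : 'I_n -> R[i]) := fun j => complex.Re (x j).
Definition im (x : 'I_n -> R[i]) := fun j => complex.Im (x j).

Lemma ddC_split x t : ddC x t = (dd (re x) t +i* dd (im x) t)%C.
Proof.
rewrite /ddC /gdot sumC; congr Complex; apply: eq_bigr => j _;
  rewrite /cC /re /im /cR; case: (x j) => a b /=; ring.
Qed.

Definition sqc (x : 'I_n -> R[i]) := \sum_j Normc.normc (x j) ^+ 2.

Lemma sqc_split x : sqc x = sq (re x) + sq (im x).
Proof. by rewrite /sqc /sq -big_split; apply: eq_bigr => j _; rewrite normc_sqr. Qed.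

Definition QQC x y := \sum_t Normc.normc (ddC x t) ^+ 2 * Normc.normc (ddC y t) ^+ 2.

Lemma QQC_le x y : QQC x y <= Sv * sqc x * sqc y.
Proof.
have -> : QQC x y = QQ (re x) (re y) + QQ (re x) (im y) + QQ (im x) (re y) + QQ (im x) (im y).
  rewrite /QQC /QQ -!big_split; apply: eq_bigr => t _ /=.
  by rewrite !ddC_split !normc_sqr /=; ring.
rewrite !sqc_split.
have -> : Sv * (sq (re x) + sq (im x)) * (sq (re y) + sq (im y)) =
  Sv * sq (re x) * sq (re y) + Sv * sq (re x) * sq (im y) +
  Sv * sq (im x) * sq (re y) + Sv * sq (im x) * sq (im y) by ring.
by rewrite !lerD ?QQ_le.
Qed.

Lemma cunit_sqc x : cunit x -> sqc x = 1.
Proof. by move/cunitE. Qed.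

Lemma conjC_real_sum (F : 'I_m -> R) : (((\sum_t F t)%:C)^*)%C = \sum_t (F t)%:C%C.
Proof. by rewrite conjc_real rmorph_sum. Qed.

Lemma pair4C_A4 x1 x2 x3 x4 :
  pair4C (A4 A) x1 x2 x3 x4 = \sum_t (ddC x1 t * ddC x2 t * ddC x3 t * ddC x4 t).
Proof.
rewrite /pair4C -(G4 cC); do 4 (apply: eq_bigr => ? _); congr (_ * _).
by rewrite conjC_real_sum; apply: eq_bigr => t _; rewrite !rmorphM.
Qed.

Lemma pair4R_A4 x1 x2 x3 x4 :
  pair4R (A4 A) x1 x2 x3 x4 = \sum_t (dd x1 t * dd x2 t * dd x3 t * dd x4 t).
Proof. by rewrite /pair4R -(G4 cR). Qed.

Lemma pair3C_A3 x y z :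
  pair3C (A3 A) x y z = \sum_t (ddC x t * ddC y t * z t).
Proof.
rewrite /pair3C -(G3 cC); do 3 (apply: eq_bigr => ? _); congr (_ * _).
by rewrite conjC_real_sum; apply: eq_bigr => t _; rewrite !rmorphM rmorph_nat.
Qed.

Lemma pair3R_A3 x y z :
  pair3R (A3 A) x y z = \sum_t (dd x t * dd y t * z t).
Proof. by rewrite /pair3R -(G3 cR). Qed.

Lemma ddC_conj x t : ddC (fun j => (x j)^*%C) t = ((ddC x t)^*)%C.
Proof.
rewrite /ddC /gdot rmorph_sum; apply: eq_bigr => j _; rewrite rmorphM /cC.
by congr (_ * _); apply/esym; apply: conjc_real.
Qed.

Lemma ffC_le x : cunit x -> \sum_t Normc.normc (ddC x t) ^+ 4 <= Sv.
Proof.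
move=> h; have := QQC_le x x; rewrite cunit_sqc // !mulr1.
by have -> : QQC x x = \sum_t Normc.normc (ddC x t) ^+ 4 by apply: eq_bigr => t _; rewrite -exprD.
Qed.

Lemma inj4C_pt x1 x2 x3 x4 : cunit x1 -> cunit x2 -> cunit x3 -> cunit x4 ->
  Normc.normc (pair4C (A4 A) x1 x2 x3 x4) <= Sv.
Proof.
move=> h1 h2 h3 h4; rewrite pair4C_A4.
apply: le_trans (normc_sum _ _ _) _.
have e1 := ffC_le _ h1; have e2 := ffC_le _ h2; have e3 := ffC_le _ h3; have e4 := ffC_le _ h4.
apply: (@le_trans _ _ (\sum_t (Normc.normc (ddC x1 t) ^+ 4 + Normc.normc (ddC x2 t) ^+ 4
   + Normc.normc (ddC x3 t) ^+ 4 + Normc.normc (ddC x4 t) ^+ 4) / 4)).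
  by apply: ler_sum => t _; rewrite !Normc.normcM; apply: amgm4; apply: normc_ge0.
rewrite -mulr_suml !big_split /=; lra.
Qed.

Lemma inj3C_pt x y z : cunit x -> cunit y -> cunit z ->
  Normc.normc (pair3C (A3 A) x y z) <= Num.sqrt Sv.
Proof.
move=> hx hy hz; rewrite pair3C_A3.
apply: le_sqrt; first exact: normc_ge0.
have h1 : Normc.normc (\sum_t ddC x t * ddC y t * z t) <=
   \sum_t (Normc.normc (ddC x t) * Normc.normc (ddC y t)) * Normc.normc (z t).
  by apply: le_trans (normc_sum _ _ _) _; apply: ler_sum => t _; rewrite !Normc.normcM.
have h2 := cs _ (fun t => Normc.normc (ddC x t) * Normc.normc (ddC y t)) (fun t => Normc.normc (z t)).
have h3 : \sum_t (Normc.normc (ddC x t) * Normc.normc (ddC y t)) ^+ 2 <= Sv.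
  have := QQC_le x y; rewrite !cunit_sqc // !mulr1.
  by have -> : QQC x y = \sum_t (Normc.normc (ddC x t) * Normc.normc (ddC y t)) ^+ 2
    by apply: eq_bigr => t _; rewrite exprMn.
move/cunitE: hz => hz; rewrite hz mulr1 in h2.
have r0 := normc_ge0 (\sum_t ddC x t * ddC y t * z t).
move: h1 h2 h3 r0.
set r := Normc.normc _; set P := \sum_t _ * _; set Q := \sum_t _ ^+ 2.
move=> h1 h2 h3 r0.
have : r ^+ 2 <= P ^+ 2 by apply: lerXn2r => //; rewrite nnegrE //; apply: le_trans h1.
lra.
Qed.

Lemma QQC_unit x y : cunit x -> cunit y -> QQC x y <= Sv.
Proof. by move=> hx hy; have := QQC_le x y; rewrite !cunit_sqc // !mulr1. Qed.

Lemma hSepC_val k (w : 'I_k -> R) (v1 v2 : 'I_k -> 'I_n -> R[i]) :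
  \sum_p \sum_q ((A22 A p q)%:C%C)^*%C *
     (\sum_(j < k) (w j)%:C%C * kron (couter (v1 j)) (couter (v2 j)) p q) =
  (\sum_j w j * QQC (v1 j) (v2 j))%:C%C.
Proof.
transitivity (\sum_(p : 'I_n * 'I_n) \sum_(q : 'I_n * 'I_n) \sum_(j < k)
   (w j)%:C%C * (((A22 A p q)%:C%C)^*%C * kron (couter (v1 j)) (couter (v2 j)) p q)).
  do 2 (apply: eq_bigr => ? _); rewrite mulr_sumr; apply: eq_bigr => j _; by rewrite mulrCA.
under eq_bigr => p _ do rewrite exchange_big.
rewrite exchange_big rmorph_sum; apply: eq_bigr => j _.
under eq_bigr => p _ do rewrite -mulr_sumr.
rewrite -mulr_sumr rmorphM; congr (_ * _).
set v := v1 j; set u := v2 j.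
transitivity (\sum_(p : 'I_n * 'I_n) \sum_(q : 'I_n * 'I_n)
  ((\sum_t (cC t p.1 * cC t q.1 * (cC t p.2 * cC t q.2))) *
   (v p.1 * (fun i => (v i)^*%C) q.1 * (u p.2 * (fun i => (u i)^*%C) q.2)))).
  do 2 (apply: eq_bigr => ? _); congr (_ * _).
  by rewrite /A22 conjC_real_sum; apply: eq_bigr => t _; rewrite /kron /router !rmorphM.
apply: etrans (G22 cC v (fun i => (v i)^*%C) u (fun i => (u i)^*%C)) _.
rewrite rmorph_sum; apply: eq_bigr => t _.
have e1 : gdot cC (fun i => (v i)^*%C) t = ((ddC v t)^*)%C := ddC_conj v t.
have e2 : gdot cC (fun i => (u i)^*%C) t = ((ddC u t)^*)%C := ddC_conj u t.
rewrite e1 e2 -/(ddC v t) -/(ddC u t).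
have -> : ddC v t * (ddC v t)^*%C * ddC u t * (ddC u t)^*%C =
  (ddC v t * (ddC v t)^*%C) * (ddC u t * (ddC u t)^*%C) by ring.
by rewrite !zconj [RHS]rmorphM.
Qed.

Lemma hSepC_pt Y : SepC Y ->
  Normc.normc (\sum_p \sum_q ((A22 A p q)%:C%C)^*%C * Y p q) <= Sv.
Proof.
move=> [k [w [v1 [v2 [w0 [ws [hv ->]]]]]]].
rewrite hSepC_val normc_real ger0_norm; last first.
  apply: sumr_ge0 => j _; apply: mulr_ge0 => //.
  by apply: sumr_ge0 => t _; apply: mulr_ge0; apply: exprn_even_ge0.
apply: (@le_trans _ _ (\sum_j w j * Sv)).
  by apply: ler_sum => j _; apply: ler_wpM2l => //; case: (hv j) => ??; apply: QQC_unit.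
by rewrite -mulr_suml ws mul1r.
Qed.

Definition emb k (x : 'I_k -> R) : 'I_k -> R[i] := fun j => (x j)%:C%C.
Arguments emb {k} x.

Lemma cunit_emb k (x : 'I_k -> R) : runit x -> cunit (emb x).
Proof.
move/runitE => h; apply/cunitE; rewrite -h; apply: eq_bigr => j _.
by rewrite /emb normc_real real_normK ?num_real.
Qed.

Lemma pair4C_emb n1 n2 n3 n4 (T : tensor4 R n1 n2 n3 n4) x1 x2 x3 x4 :
  pair4C T (emb x1) (emb x2) (emb x3) (emb x4) = (pair4R T x1 x2 x3 x4)%:C%C.
Proof.
rewrite /pair4R rmorph_sum; apply: eq_bigr => i _.
rewrite rmorph_sum; apply: eq_bigr => j _.
rewrite rmorph_sum; apply: eq_bigr => k _.
rewrite rmorph_sum; apply: eq_bigr => l _.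
by rewrite !rmorphM conjc_real.
Qed.

Lemma pair3C_emb n1 n2 n3 (T : tensor3 R n1 n2 n3) x1 x2 x3 :
  pair3C T (emb x1) (emb x2) (emb x3) = (pair3R T x1 x2 x3)%:C%C.
Proof.
rewrite /pair3R rmorph_sum; apply: eq_bigr => i _.
rewrite rmorph_sum; apply: eq_bigr => j _.
rewrite rmorph_sum; apply: eq_bigr => k _.
by rewrite !rmorphM conjc_real.
Qed.

Lemma inj4_pt x1 x2 x3 x4 : runit x1 -> runit x2 -> runit x3 -> runit x4 ->
  `|pair4R (A4 A) x1 x2 x3 x4| <= Sv.
Proof.
move=> h1 h2 h3 h4; rewrite -normc_real -pair4C_emb.
by apply: inj4C_pt; apply: cunit_emb.
Qed.

Lemma inj3_pt x y z : runit x -> runit y -> runit z ->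
  `|pair3R (A3 A) x y z| <= Num.sqrt Sv.
Proof.
move=> h1 h2 h3; rewrite -normc_real -pair3C_emb.
by apply: inj3C_pt; apply: cunit_emb.
Qed.

Lemma SepR_C (Y : op2 R n) : SepR Y -> SepC (fun p q => (Y p q)%:C%C).
Proof.
move=> [k [w [v1 [v2 [w0 [ws [hv ->]]]]]]].
exists k, w, (fun j => emb (v1 j)), (fun j => emb (v2 j)); split => //; split => //.
split; first by move=> j; case: (hv j) => ??; split; apply: cunit_emb.
apply: funext => p; apply: funext => q; rewrite rmorph_sum; apply: eq_bigr => j _.
by rewrite /kron /couter /router /emb !rmorphM !conjc_real.
Qed.

Lemma hSepR_val (Y : op2 R n) :
  `|\sum_p \sum_q A22 A p q * Y p q| =
  Normc.normc (\sum_p \sum_q ((A22 A p q)%:C%C)^*%C * (Y p q)%:C%C).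
Proof.
rewrite -normc_real rmorph_sum; congr Normc.normc; apply: eq_bigr => p _.
rewrite rmorph_sum; apply: eq_bigr => q _.
by rewrite rmorphM conjc_real.
Qed.

Lemma hSepR_pt (Y : op2 R n) : SepR Y -> `|\sum_p \sum_q A22 A p q * Y p q| <= Sv.
Proof. by move=> h; rewrite hSepR_val; apply: (hSepC_pt _ (SepR_C _ h)). Qed.

Lemma inj4_ge0 : 0 <= inj4 (A4 A).
Proof.
rewrite /inj4; set E := (X in sup X).
have ub : ubound E Sv by move=> r [x1 [x2 [x3 [x4 [h1 [h2 [h3 [h4 ->]]]]]]]]; apply: inj4_pt.
by apply: (my_sup_ge0 ub) => r [x1 [x2 [x3 [x4 [h1 [h2 [h3 [h4 ->]]]]]]]].
Qed.

Lemma inj4_eq : inj4 (A4 A) = Sv.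
Proof.
have g0 := inj4_ge0.
move: g0; rewrite /inj4; set E := (X in sup X) => g0.
have ub : ubound E Sv by move=> r [x1 [x2 [x3 [x4 [h1 [h2 [h3 [h4 ->]]]]]]]]; apply: inj4_pt.
apply/le_anti/andP; split; first by apply: my_sup_le; [exact: ub | exact: Sv_ge0].
rewrite {1}/Sv; apply: my_sup_le => // e [x [hx ->]].
have hr : runit x by apply/runitE.
have e1 : pair4R (A4 A) x x x x = ff x by rewrite pair4R_A4; apply: eq_bigr => t _; ring.
apply: (my_sup_ub ub); exists x, x, x, x; do 4 (split => //).
by rewrite e1 ger0_norm // ff_ge0.
Qed.

Lemma inj4C_eq : inj4C (A4 A) = Sv.
Proof.
rewrite /inj4C; set E := (X in sup X).
have ub : ubound E Sv by move=> r [x1 [x2 [x3 [x4 [h1 [h2 [h3 [h4 ->]]]]]]]]; apply: inj4C_pt.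
have g0 : 0 <= sup E.
  by apply: (my_sup_ge0 ub) => r [x1 [x2 [x3 [x4 [h1 [h2 [h3 [h4 ->]]]]]]]]; apply: normc_ge0.
apply/le_anti/andP; split; first by apply: my_sup_le; [exact: ub | exact: Sv_ge0].
rewrite -inj4_eq /inj4; apply: my_sup_le => // r [x1 [x2 [x3 [x4 [h1 [h2 [h3 [h4 ->]]]]]]]].
apply: (my_sup_ub ub); exists (emb x1), (emb x2), (emb x3), (emb x4).
do 4 (split; first by apply: cunit_emb).
by rewrite pair4C_emb normc_real.
Qed.

Lemma inj3_ge0 : 0 <= inj3 (A3 A).
Proof.
rewrite /inj3; set E := (X in sup X).
have ub : ubound E (Num.sqrt Sv) by move=> r [x1 [x2 [x3 [h1 [h2 [h3 ->]]]]]]; apply: inj3_pt.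
by apply: (my_sup_ge0 ub) => r [x1 [x2 [x3 [h1 [h2 [h3 ->]]]]]].
Qed.

Lemma inj3_le : inj3 (A3 A) <= Num.sqrt Sv.
Proof.
rewrite /inj3; apply: my_sup_le; last exact: sqrtr_ge0.
by move=> r [x1 [x2 [x3 [h1 [h2 [h3 ->]]]]]]; apply: inj3_pt.
Qed.

Lemma inj3_eq : inj3 (A3 A) ^+ 2 = Sv.
Proof.
have g0 := inj3_ge0; have le := inj3_le.
apply/le_anti/andP; split.
  rewrite -(sqr_sqrtr Sv_ge0); apply: lerXn2r => //; rewrite nnegrE ?sqrtr_ge0 //.
move: g0 le; rewrite /inj3; set E := (X in sup X) => g0 le.
have ub : ubound E (Num.sqrt Sv) by move=> r [x1 [x2 [x3 [h1 [h2 [h3 ->]]]]]]; apply: inj3_pt.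
rewrite {1}/Sv; apply: my_sup_le; last exact: sqr_ge0.
move=> e [x [hx ->]].
have hr : runit x by apply/runitE.
have [f0|fp] := eqVneq (ff x) 0; first by rewrite f0 sqr_ge0.
have fp' : 0 < ff x by rewrite lt_neqAle eq_sym fp ff_ge0.
set s := Num.sqrt (ff x).
have s0 : 0 < s by rewrite sqrtr_gt0.
have s2 : s ^+ 2 = ff x by rewrite sqr_sqrtr // ltW.
pose z := fun t => dd x t ^+ 2 / s.
have hz : runit z.
  apply/runitE; rewrite /z.
  transitivity (ff x / s ^+ 2).
    by rewrite /ff mulr_suml; apply: eq_bigr => t _; rewrite expr_div_n -exprM.
  by rewrite s2 divff.
have e1 : pair3R (A3 A) x x z = s.
  rewrite pair3R_A3 /z.
  transitivity (ff x / s); last by rewrite -s2; field; rewrite gt_eqF.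
  by rewrite /ff mulr_suml; apply: eq_bigr => t _; ring.
have hs : s <= sup E.
  apply: (my_sup_ub ub); exists x, x, z; do 3 (split => //).
  by rewrite e1 ger0_norm // ltW.
rewrite -s2; apply: lerXn2r => //; rewrite nnegrE ltW //.
Qed.

Lemma inj3C_eq : inj3C (A3 A) ^+ 2 = Sv.
Proof.
rewrite /inj3C; set E := (X in sup X).
have ub : ubound E (Num.sqrt Sv) by move=> r [x1 [x2 [x3 [h1 [h2 [h3 ->]]]]]]; apply: inj3C_pt.
have g0 : 0 <= sup E.
  by apply: (my_sup_ge0 ub) => r [x1 [x2 [x3 [h1 [h2 [h3 ->]]]]]]; apply: normc_ge0.
have le : sup E <= Num.sqrt Sv.
  by apply: my_sup_le; [move=> r [x1 [x2 [x3 [h1 [h2 [h3 ->]]]]]]; apply: inj3C_pt | exact: sqrtr_ge0].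
apply/le_anti/andP; split.
  rewrite -(sqr_sqrtr Sv_ge0); apply: lerXn2r => //; rewrite nnegrE ?sqrtr_ge0 //.
have le3 : inj3 (A3 A) <= sup E.
  rewrite /inj3; apply: my_sup_le => // r [x1 [x2 [x3 [h1 [h2 [h3 ->]]]]]].
  apply: (my_sup_ub ub); exists (emb x1), (emb x2), (emb x3).
  do 3 (split; first by apply: cunit_emb).
  by rewrite pair3C_emb normc_real.
rewrite -inj3_eq; apply: lerXn2r => //; rewrite nnegrE ?inj3_ge0 //.
Qed.

Lemma hSepR_eq : hSepR (A22 A) = Sv.
Proof.
rewrite /hSepR; set E := (X in sup X).
have ub : ubound E Sv by move=> r [Y [hY ->]]; apply: hSepR_pt.
apply/le_anti/andP; split; first by apply: my_sup_le; [exact: ub | exact: Sv_ge0].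
have g0 : 0 <= sup E by apply: (my_sup_ge0 ub) => r [Y [hY ->]].
rewrite {1}/Sv; apply: my_sup_le => // e [x [hx ->]].
have hr : runit x by apply/runitE.
pose Y : op2 R n := fun p q => \sum_(j < 1) 1 * kron (router x) (router x) p q.
have hY : SepR Y.
  exists 1%N, (fun _ => 1), (fun _ => x), (fun _ => x).
  by split => //; split; [rewrite big_ord1 | split].
have e1 : \sum_p \sum_q A22 A p q * Y p q = ff x.
  transitivity (\sum_(p : 'I_n * 'I_n) \sum_(q : 'I_n * 'I_n)
    ((\sum_t (cR t p.1 * cR t q.1 * (cR t p.2 * cR t q.2))) *
     (x p.1 * x q.1 * (x p.2 * x q.2)))).
    by do 2 (apply: eq_bigr => ? _); rewrite /Y big_ord1 mul1r.
  rewrite G22; apply: eq_bigr => t _; rewrite /dd; ring.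
apply: (my_sup_ub ub); exists Y; split => //.
by rewrite e1 ger0_norm // ff_ge0.
Qed.

Lemma hSepC_eq : hSepC (fun p q => (A22 A p q)%:C%C) = Sv.
Proof.
rewrite /hSepC; set E := (X in sup X).
have ub : ubound E Sv by move=> r [Y [hY ->]]; apply: hSepC_pt.
apply/le_anti/andP; split; first by apply: my_sup_le; [exact: ub | exact: Sv_ge0].
have g0 : 0 <= sup E by apply: (my_sup_ge0 ub) => r [Y [hY ->]]; apply: normc_ge0.
rewrite -hSepR_eq /hSepR; apply: my_sup_le => // r [Y [hY ->]].
apply: (my_sup_ub ub); exists (fun p q => (Y p q)%:C%C); split; first exact: SepR_C.
exact: hSepR_val.
Qed.

Lemma L4_exp x : lpnorm 4%:R (mxapply A x) ^+ 4 = ff x.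
Proof.
rewrite lpnorm_exp //; apply: eq_bigr => t _.
by rewrite -normrX ger0_norm // exprn_even_ge0.
Qed.

Lemma L2_exp x : lpnorm 2%:R x ^+ 2 = sq x.
Proof. by rewrite lpnorm_exp //; apply: eq_bigr => j _; rewrite real_normK ?num_real. Qed.

Lemma ratio_pt x : x <> (fun _ => 0) ->
  lpnorm 4%:R (mxapply A x) / lpnorm 2%:R x <= Num.sqrt (Num.sqrt Sv).
Proof.
move=> hx.
have sp : sq x != 0.
  apply/eqP => h; apply: hx; apply: funext => j; exact: sq_eq0.
have sp' : 0 < sq x by rewrite lt_neqAle eq_sym sp sq_ge0.
apply: le_sqrt4; first by apply: divr_ge0; apply: lpnorm_ge0.
rewrite expr_div_n L4_exp (_ : 4 = 2 * 2)%N // exprM L2_exp.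
rewrite ler_pdivrMr ?exprn_gt0 //; exact: ff_le.
Qed.

Lemma norm_eq : norm2to4 A ^+ 4 = Sv.
Proof.
rewrite /norm2to4; set E := (X in sup X).
have ub : ubound E (Num.sqrt (Num.sqrt Sv)) by move=> r [x [hx ->]]; apply: ratio_pt.
have g0 : 0 <= sup E.
  by apply: (my_sup_ge0 ub) => r [x [hx ->]]; apply: divr_ge0; apply: lpnorm_ge0.
have le : sup E <= Num.sqrt (Num.sqrt Sv).
  by apply: my_sup_le; [exact: ub | exact: sqrtr_ge0].
apply/le_anti/andP; split.
  rewrite -(sqrt4K _ Sv_ge0); apply: lerXn2r => //; rewrite nnegrE ?sqrtr_ge0 //.
rewrite {1}/Sv; apply: my_sup_le; last exact: exprn_even_ge0.
move=> e [x [hx ->]].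
have hr : runit x by apply/runitE.
have hx0 : x <> (fun _ => 0).
  move=> h; move: hx; rewrite h /sq big1 => [/esym/eqP|j _]; first by rewrite oner_eq0.
  by rewrite expr0n.
have hrat : lpnorm 4%:R (mxapply A x) / lpnorm 2%:R x <= sup E.
  by apply: (my_sup_ub ub); exists x.
move: hrat; rewrite hr divr1 => hrat.
rewrite -L4_exp; apply: lerXn2r => //; rewrite nnegrE ?lpnorm_ge0 //.
Qed.

End Main.

Theorem lemma9p3 (R : realType) (m n : nat) (A : 'M[R]_(m, n)) :
  norm2to4 A ^+ 4 = inj4 (A4 A) /\
  inj4 (A4 A) = inj3 (A3 A) ^+ 2 /\
  inj3 (A3 A) ^+ 2 = inj4C (A4 A) /\
  inj4C (A4 A) = inj3C (A3 A) ^+ 2 /\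
  inj3C (A3 A) ^+ 2 = hSepR (A22 A) /\
  hSepR (A22 A) = hSepC (fun p q => (A22 A p q)%:C%C).
Proof.
rewrite norm_eq inj4_eq inj3_eq inj4C_eq inj3C_eq hSepR_eq hSepC_eq.
by do 5 split.
Qed.
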